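(* Fix integers $m\ge d\ge1$, $\lambda=d/m$, and monic polynomials $p,q$ of degree $d$ with nonnegative real roots. Then $\mathbb E\big[\mathbb{S}(p\boxplus_{d,\lambda}q)\big]=\mathbb E[\mathbb{S}p]+\mathbb E[\mathbb{S}q]=0$ and $\mathrm{Var}\big[\mathbb{S}(p\boxplus_{d,\lambda}q)\big]=\mathrm{Var}[\mathbb{S}p]+\mathrm{Var}[\mathbb{S}q]$.
   Context: For a real-rooted polynomial $r$ with roots $r_1,\dots,r_n$ (with multiplicity), $\mathbb E(r)=\frac1n\sum_ir_i$ and $\mathrm{Var}(r)=\frac1n\sum_i(r_i-\mathbb E(r))^2$. $\mathbb{S}p(x)=p(x^2)$. $(p\boxplus_{d,\lambda}q)(x)=\sum_{k=0}^dx^{d-k}(-1)^k\sum_{i+j=k}\frac{(d-i)!(d-j)!}{d!(d-k)!}\frac{(m-i)!(m-j)!}{m!(m-k)!}a_ib_j$ for $p=\sum(-1)^ia_ix^{d-i}$, $q=\sum(-1)^ib_ix^{d-i}$; it is monic with nonnegative real roots. *)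

(* Defs.v *)
From HB Require Import structures.
From mathcomp Require Import all_boot all_order all_algebra.
From mathcomp Require Import reals.
Set Implicit Arguments. Unset Strict Implicit. Unset Printing Implicit Defensive.
Import Order.TTheory GRing.Theory Num.Theory.
Local Open Scope ring_scope.

Section Defs.
Variable R : realType.

(* [s] is a list of the roots (with multiplicity) of the monic polynomial [r],
   i.e. r = prod_{x in s} (X - x).  Order in s is irrelevant for E and Var. *)
Definition roots_list (r : {poly R}) (s : seq R) : Prop :=
  r = \prod_(x <- s) ('X - x%:P).

Definition monic_nonneg_rooted (d : nat) (p : {poly R}) : Prop :=
  exists s : seq R, [/\ size s = d, all (fun x => 0 <= x) s & roots_list p s].

Definition rmean (s : seq R) : R := (\sum_(x <- s) x) / (size s)%:R.
Definition rvar (s : seq R) : R :=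
  (\sum_(x <- s) (x - rmean s) ^+ 2) / (size s)%:R.

Definition Spoly (p : {poly R}) : {poly R} := p \Po 'X^2.

(* a_i with p = sum_i (-1)^i a_i x^(d-i) *)
Definition sgcoef (d : nat) (p : {poly R}) (i : nat) : R :=
  (-1) ^+ i * p`_(d - i).

Definition rect_conv (d m : nat) (p q : {poly R}) : {poly R} :=
  \sum_(k < d.+1)
    ((-1) ^+ k *
     \sum_(i < k.+1)
       (((d - i)`! * (d - (k - i))`!)%:R / ((d`! * (d - k)`!)%:R) *
        (((m - i)`! * (m - (k - i))`!)%:R / ((m`! * (m - k)`!)%:R)) *
        sgcoef d p i * sgcoef d q (k - i))) *: 'X^(d - k).

End Defs.

(* Main.v *)
Require Import Defs.
From HB Require Import structures.
From mathcomp Require Import all_boot all_order all_algebra.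
From mathcomp Require Import reals.
From mathcomp Require Import ring zify.
Import Order.TTheory GRing.Theory Num.Theory.
Local Open Scope ring_scope.

Lemma coef2_prod (R : comNzRingType) (s : seq R) n : size s = n.+2 ->
  (\prod_(x <- s) ('X - x%:P))`_n *+ 2 =
  (\sum_(x <- s) x) ^+ 2 - \sum_(x <- s) x ^+ 2.
Proof.
elim: s n => [|x t IH] n //= [Hs].
rewrite !big_cons mulrBl coefB coefXM coefCM.
case: n Hs => [|n] Hs.
  case: t {IH} Hs => [|y [|]] // _.
  rewrite !big_cons !big_nil /= mulr1 coefB coefX coefC /=.
  ring.
have := @coefPn_prod_XsubC _ t; rewrite Hs /= => ->//.
rewrite mulrnBl (IH n Hs); ring.
Qed.
Lemma S_stats (R : realType) (P : {poly R}) d s : (0 < d)%N -> P`_d = 1 ->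
  (forall j, (d < j)%N -> P`_j = 0) -> roots_list (Spoly P) s ->
  [/\ size s = (d.*2)%N, rmean s = 0 & rvar s = - P`_d.-1 / d%:R].
Proof.
case: d => // d _ Pd Pj; rewrite /roots_list /Spoly => Hs.
have cQ i : (P \Po 'X^2)`_i = if (2 %| i)%N then P`_(i %/ 2) else 0.
  exact: coef_comp_poly_Xn.
have Hsz : size s = (d.+1).*2.
  have: size (P \Po 'X^2) = (size s).+1 by rewrite Hs size_prod_XsubC.
  suff -> : size (P \Po 'X^2) = ((d.+1).*2).+1 by case.
  apply/anti_leq/andP; split.
    apply/leq_sizeP => j hj; rewrite cQ; case: ifP => // /dvdnP [k ek].
    rewrite ek mulnK //; apply: Pj; lia.
  rewrite ltnNge; apply/negP => /leq_sizeP /(_ ((d.+1).*2) (leqnn _)).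
  rewrite cQ dvdn2 odd_double /= -muln2 mulnK // Pd => /eqP; rewrite oner_eq0.
  done.
have Hsum : \sum_(x <- s) x = 0.
  have := @coefPn_prod_XsubC _ s; rewrite -Hs Hsz cQ.
  rewrite doubleS /= dvdn2 /= odd_double /= => /(_ isT) /eqP.
  by rewrite eq_sym oppr_eq0 => /eqP.
have Hm : rmean s = 0 by rewrite /rmean Hsum mul0r.
split => //.
rewrite /rvar Hm.
under eq_bigr do rewrite subr0.
have := @coef2_prod _ s (d.*2)%N; rewrite Hsz doubleS => /(_ erefl).
rewrite -Hs cQ dvdn2 odd_double /= -muln2 mulnK // Hsum expr0n /= sub0r.
move=> H.
have -> : \sum_(i <- s) i ^+ 2 = - (P`_d *+ 2) by rewrite H opprK.
have -> : ((d * 2).+2)%:R = (d.+1)%:R * 2 :> R by rewrite -natrM; congr _%:R; lia.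
have hd : (d.+1)%:R != 0 :> R by rewrite pnatr_eq0.
rewrite mulr2n; field.
by rewrite -natr1 addrC in hd.
Qed.
Lemma rc_coefs (R : realType) d m (p q : {poly R}) : (d <= m)%N ->
  let r := rect_conv d.+1 m p q in
  [/\ r`_d.+1 = p`_d.+1 * q`_d.+1,
      forall j, (d.+1 < j)%N -> r`_j = 0 &
      r`_d = p`_d * q`_d.+1 + p`_d.+1 * q`_d].
Proof.
move=> hdm r.
have cr j : r`_j = \sum_(k < d.+2) ((-1) ^+ k *
     \sum_(i < k.+1)
       ((((d.+1) - i)`! * ((d.+1) - (k - i))`!)%:R / (((d.+1)`! * ((d.+1) - k)`!)%:R) *
        (((m - i)`! * (m - (k - i))`!)%:R / ((m`! * (m - k)`!)%:R)) *
        sgcoef d.+1 p i * sgcoef d.+1 q (k - i))) * (j == (d.+1 - k)%N)%:R.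
  by rewrite /r /rect_conv coef_sum; apply: eq_bigr => k _; rewrite coefZ coefXn.
have nz n : (n`!)%:R != 0 :> R by rewrite pnatr_eq0 -lt0n fact_gt0.
have nz2 a b : ((a`! * b`!)%:R) != 0 :> R by rewrite natrM mulf_neq0.
split.
- rewrite cr big_ord_recl [\sum_(i < d.+1) _]big1 ?addr0; last first.
    move=> k _; rewrite (_ : (_ == _)%N = false) ?mulr0 //; apply/negbTE.
    by have := ltn_ord k; rewrite /= /bump /=; lia.
  rewrite /= eqxx mulr1 expr0 mul1r big_ord_recl big_ord0 addr0 /= /sgcoef.
  by rewrite ?subn0 ?expr0 !mul1r ?divff // ?mul1r.
- move=> j hj; rewrite cr big1 // => k _.
  rewrite (_ : (_ == _)%N = false) ?mulr0 //; apply/negbTE; lia.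
- rewrite cr big_ord_recl big_ord_recl [\sum_(i < d) _]big1 ?addr0; last first.
    move=> k _; rewrite (_ : (_ == _)%N = false) ?mulr0 //; apply/negbTE.
    by have := ltn_ord k; rewrite /= /bump /=; lia.
  have -> : (d == d.+1 - 0)%N = false by lia.
  rewrite mulr0 add0r /=.
  have -> : (d == d.+1 - 1)%N by lia.
  rewrite mulr1 expr1 !big_ord_recl big_ord0 addr0 /= /sgcoef.
  rewrite /bump /= ?subn0 ?subnn ?subn0 ?subSS ?subn0 ?subn1 /=.
  rewrite (mulnC d`! (d.+1)`!) (mulnC (m.-1)`! m`!) !divff //.
  ring.
Qed.

Lemma monic_facts (R : realType) d (p : {poly R}) : monic_nonneg_rooted d p ->
  p`_d = 1 /\ forall j, (d < j)%N -> p`_j = 0.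
Proof.
case=> s [Hsz _ Hp]; rewrite /roots_list in Hp.
have Hs : size p = d.+1 by rewrite Hp size_prod_XsubC Hsz.
split; last by move=> j hj; apply: nth_default; rewrite Hs.
have := lead_coef_prod_XsubC s predT (fun x => x).
by rewrite -Hp /lead_coef Hs.
Qed.

Theorem mainTheorem11 (R : realType) (d m : nat) (p q : {poly R}) :
  (1 <= d)%N -> (d <= m)%N ->
  monic_nonneg_rooted d p -> monic_nonneg_rooted d q ->
  forall sp sq s : seq R,
    roots_list (Spoly p) sp -> roots_list (Spoly q) sq ->
    roots_list (Spoly (rect_conv d m p q)) s ->
    [/\ rmean s = rmean sp + rmean sq,
        rmean sp + rmean sq = 0
      & rvar s = rvar sp + rvar sq].
Proof.
case: d => // d _ hdm /monic_facts [pd pj] /monic_facts [qd qj] sp sq s Hp Hq Hs.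
have [r1 r2 r3] := @rc_coefs _ _ _ p q (ltnW hdm).
rewrite pd qd mul1r in r1.
have [_ mp vp] := @S_stats _ _ _ _ (isT : (0 < d.+1)%N) pd pj Hp.
have [_ mq vq] := @S_stats _ _ _ _ (isT : (0 < d.+1)%N) qd qj Hq.
have [_ ms vs] := @S_stats _ _ _ _ (isT : (0 < d.+1)%N) r1 r2 Hs.
rewrite ms mp mq vs vp vq /= r3 pd qd mulr1 mul1r addr0; split => //.

by rewrite opprD mulrDl.
Qed.
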